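(* In the setting of the addition algorithm, for every $\varphi\in\mathbb{R}^V$ with $M(\varphi)\le L(\tau,\varepsilon)$ we have $$\tau(v)-\tau'(v,r(\varphi,v))\le T^+(\varphi)_v-\varphi_v\le\tau(v)\quad\text{for all }v\in V.$$ Consequently (Corollary 2.4), for such $\varphi$, $\tau(v)-\varepsilon/2\le T^+(\varphi)_v-\varphi_v=\varphi_v-T^-(\varphi)_v\le\tau(v)$ for all $v\in V$.
   Context: Addition algorithm. Let $G=(V,E)$ be a finite connected graph ($v\sim w$ means $(v,w)\in E$), $\tau:V\to[0,\infty)$, $0<\varepsilon\le1/2$, and fix a total order $\preceq$ on $V$. Let $f:\mathbb{R}\to\mathbb{R}$ be $f(x)=0$ for $|x|\ge1$, $f(x)=(1+x)/\varepsilon$ on $[-1,-1+\varepsilon]$, $f(x)=1$ on $[-1+\varepsilon,1-\varepsilon]$, $f(x)=(1-x)/\varepsilon$ on $[1-\varepsilon,1]$. For $v\in V$, $h,t\in\mathbb{R}$ let $m_{v,h,t}(h')=\min(\tau(v)-t,\varepsilon/2)f(h'-h)+t$ if $\tau(v)\ge t$, and $m_{v,h,t}(h')=t$ if $\tau(v)<t$. On input $\varphi\in\mathbb{R}^V$ the algorithm outputs an ordering $P_1,\dots,P_{|V|}$ of $V$, numbers $s_k$ and functions $\tau_k:V\times\mathbb{R}\to\mathbb{R}$: set $\tau_1(v,h)=\tau(v)$; for $k=1,\dots,|V|$: let $P_k$ be the vertex $v\in V\setminus\{P_1,\dots,P_{k-1}\}$ minimizing $\tau_k(v,\varphi_v)$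 (ties broken by taking the $\preceq$-smallest); set $s_k=\tau_k(P_k,\varphi_{P_k})$; if $k<|V|$ set $\tau_{k+1}(v,h)=\tau_k(v,h)$ if $v\in\{P_1,\dots,P_k\}$ or $v\not\sim P_k$, and $\tau_{k+1}(v,h)=\min(\tau_k(v,h),m_{v,\varphi_{P_k},s_k}(h))$ otherwise. Define $T^+(\varphi)_{P_k}=\varphi_{P_k}+s_k$ ($1\le k\le|V|$) and $T^-(\varphi)=2\varphi-T^+(\varphi)$. Further notation: $d_G$ is graph distance; $\tau'(v,k):=\max\{\tau(v)-\tau(w):w\in V,\ d_G(v,w)\le k\}$ for integers $k\ge0$; $L(\tau,\varepsilon):=\sup\{k\ge0 \text{ integer}:\tau'(v,k)\le\varepsilon/2\ \forall v\in V\}-1$ (possibly $+\infty$). $\mathcal{E}(\varphi):=\{(v,w)\in E:|\varphi_v-\varphi_w|\ge1-\varepsilon\}$; $v\leftrightarrow w$ if $v$ and $w$ are connected by a path of edges of $\mathcal{E}(\varphi)$ (including $v=w$); $r(\varphi,v):=\max\{d_G(v,w):v\leftrightarrow w\}$ and $M(\varphi):=\max\{d_G(v,w):v\leftrightarrow w\}$ over all pairs. *)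

(* Defs.v *)
From HB Require Import structures.
From mathcomp Require Import all_boot all_order all_algebra.
Set Implicit Arguments. Unset Strict Implicit. Unset Printing Implicit Defensive.
Import Order.TTheory GRing.Theory Num.Theory.
Local Open Scope ring_scope.

Section Addition.
Variables (R : realFieldType) (V : finType).
Variable adj : rel V.
Variable tau : V -> R.
Variable eps : R.
Variable ord : rel V.

Definition fbump (x : R) : R :=
  if 1 <= `|x| then 0
  else if x <= -1 + eps then (1 + x) / eps
  else if x <= 1 - eps then 1
  else (1 - x) / eps.

Definition mvht (v : V) (h t h' : R) : R :=
  if t <= tau v then Num.min (tau v - t) (eps / 2) * fbump (h' - h) + t
  else t.

(* state after k steps: (P_1..P_k, s_1..s_k, tau_{k+1}) *)
Record state := State { Ps : seq V; ss : seq R; tk : V -> R -> R }.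

Definition is_next (phi : V -> R) (st : state) (v : V) : bool :=
  (v \notin Ps st) &&
  [forall w, (w \notin Ps st) ==>
     ((tk st v (phi v) < tk st w (phi w)) ||
      ((tk st v (phi v) == tk st w (phi w)) && ord v w))].

Definition step (phi : V -> R) (st : state) : state :=
  match [pick v | is_next phi st v] with
  | Some P =>
      let s := tk st P (phi P) in
      State (rcons (Ps st) P) (rcons (ss st) s)
        (fun v h => if (v \in rcons (Ps st) P) || ~~ adj v P then tk st v h
                    else Num.min (tk st v h) (mvht v (phi P) s h))
  | None => st
  end.

Definition run (phi : V -> R) : state :=
  iter #|V| (step phi) (State [::] [::] (fun v _ => tau v)).

Definition Tplus (phi : V -> R) (v : V) : R :=
  phi v + nth 0 (ss (run phi)) (index v (Ps (run phi))).
Definition Tminus (phi : V -> R) (v : V) : R := 2 * phi v - Tplus phi v.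

Fixpoint distle (k : nat) (v w : V) : bool :=
  match k with
  | 0 => v == w
  | k'.+1 => distle k' v w || [exists u, distle k' v u && adj u w]
  end.

(* graph distance d_G (for connected G; equals #|V| if unreachable) *)
Definition dG (v w : V) : nat :=
  find (fun k => distle k v w) (iota 0 #|V|.+1).

(* tau'(v,k) = max { tau v - tau w : d_G(v,w) <= k }  (the set contains w = v,
   so the max is >= 0 and folding from 0 gives the true maximum) *)
Definition tau' (v : V) (k : nat) : R :=
  \big[Num.max/0]_(w | distle k v w) (tau v - tau w).

Definition goodk (k : nat) : bool := [forall v, tau' v k <= eps / 2].

(* n <= L(tau,eps) = sup{k | goodk k} - 1, in N ∪ {+oo}:
   equivalently n + 1 <= sup{k | goodk k}, i.e. n+1 is below every
   natural upper bound of that set (vacuous if the sup is +oo). *)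
Definition leL (n : nat) : Prop :=
  forall b : nat, (forall k : nat, goodk k -> (k <= b)%N) -> (n.+1 <= b)%N.

Definition Ephi (phi : V -> R) : rel V :=
  fun v w => adj v w && (1 - eps <= `|phi v - phi w|).
Definition linked (phi : V -> R) (v w : V) : bool := connect (Ephi phi) v w.

Definition rphi (phi : V -> R) (v : V) : nat :=
  \max_(w | linked phi v w) dG v w.
Definition Mphi (phi : V -> R) : nat :=
  \max_(p : V * V | linked phi p.1 p.2) dG p.1 p.2.

End Addition.

(* Main.v *)
Require Import Defs.
From HB Require Import structures.
From mathcomp Require Import all_boot all_order all_algebra ring lra.
Import Order.TTheory GRing.Theory Num.Theory.
Local Open Scope ring_scope.

Section Proof.
Set Implicit Arguments. Unset Strict Implicit.
Variables (R : realFieldType) (V : finType) (adj : rel V)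
  (tau : V -> R) (eps : R) (ord : rel V).
Hypotheses (adj_sym : symmetric adj) (G_conn : forall v w : V, connect adj v w)
  (eps_gt0 : 0 < eps) (ord_refl : reflexive ord)
  (ord_trans : transitive ord) (ord_total : total ord).
Variable phi : V -> R.
Hypothesis (hM : leL adj tau eps (Mphi adj eps phi)).

Lemma distle_S k v w : distle adj k v w -> distle adj k.+1 v w.
Proof. by move=> h; rewrite /= h. Qed.

Lemma distle_mono k k' v w : (k <= k')%N -> distle adj k v w -> distle adj k' v w.
Proof.
elim: k' => [|k' IH]; first by rewrite leqn0 => /eqP ->.
rewrite leq_eqVlt => /orP [/eqP -> //|hk] h; apply: distle_S; exact: IH.
Qed.

Lemma distle_cons k v P w : adj v P -> distle adj k P w -> distle adj k.+1 v w.
Proof.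
move=> hvP; elim: k w => [|k IH] w.
  move=> /= /eqP <-; apply/orP; right; apply/existsP; exists v; by rewrite eqxx.
move=> /orP [h|/existsP [u /andP [h1 h2]]].
  by apply: distle_S; exact: IH.
apply/orP; right; apply/existsP; exists u; apply/andP; split => //; exact: IH u h1.
Qed.

Lemma distle_path p x : path adj x p -> distle adj (size p) x (last x p).
Proof.
elim: p x => [|y p IH] x /=; first by rewrite eqxx.
move=> /andP [hxy hp]; exact: distle_cons hxy (IH y hp).
Qed.

Lemma dG_spec v w : distle adj (dG adj v w) v w.
Proof.
have hV : distle adj #|V| v w.
  have /connectP [p hp ->] := G_conn v w.
  case/shortenP: hp => p' hp' hu _.
  apply: (distle_mono _ (distle_path hp')).
  have := max_card (mem (v :: p')); rewrite (card_uniqP hu) /=.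
  by move=> h; apply: ltnW.
rewrite /dG.
have hh : has (fun k => distle adj k v w) (iota 0 #|V|.+1).
  apply/hasP; exists #|V|; last exact: hV. by rewrite mem_iota add0n leq0n ltnSn.
have hlt : (find (fun k => distle adj k v w) (iota 0 #|V|.+1) < #|V|.+1)%N.
  by rewrite -[X in (_ < X)%N](size_iota 0) -has_find.
by have := nth_find 0 hh; rewrite nth_iota // add0n.
Qed.

Lemma le_tau' k v w : distle adj k v w -> tau v - tau w <= tau' adj tau v k.
Proof. move=> h; rewrite /tau'; exact: (le_bigmax_cond _ (fun w => tau v - tau w) h). Qed.

Lemma tau'_mono k k' v : (k <= k')%N -> tau' adj tau v k <= tau' adj tau v k'.
Proof. move=> hk; rewrite /tau'; apply: sub_bigmax => w; exact: distle_mono. Qed.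

Lemma good_M1 : goodk adj tau eps (Mphi adj eps phi).+1.
Proof.
case: (boolP (goodk _ _ _ _)) => // hn; exfalso.
suff: ((Mphi adj eps phi).+1 <= Mphi adj eps phi)%N by rewrite ltnn.
apply: hM => k gk.
rewrite leqNgt; apply/negP => hk; move/negP: hn; apply.
apply/forallP => v; apply: le_trans (tau'_mono v hk) _.
exact: (forallP gk v).
Qed.

Lemma rphi_le v : (rphi adj eps phi v <= Mphi adj eps phi)%N.
Proof.
apply/bigmax_leqP => w hw.
exact: (leq_bigmax_cond (F := fun p : V * V => dG adj p.1 p.2) (P := fun p : V * V => linked adj eps phi p.1 p.2) (v, w)).
Qed.

Lemma near v w : linked adj eps phi v w -> distle adj (rphi adj eps phi v) v w.
Proof.
move=> h; apply: distle_mono (dG_spec v w).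
rewrite /rphi; exact: (@leq_bigmax_cond V (fun w => linked adj eps phi v w) (fun w => dG adj v w) w h).
Qed.

Lemma close v P w : adj v P -> linked adj eps phi P w -> tau v <= tau w + eps / 2.
Proof.
move=> hvP hPw.
have h1 := distle_cons hvP (near hPw).
have h2 : distle adj (Mphi adj eps phi).+1 v w.
  apply: distle_mono h1; rewrite ltnS; exact: rphi_le.
have := le_tau' h2; have := forallP good_M1 v; lra.
Qed.


Ltac elra := have := eps_gt0; lra.

Lemma fbump_ge0 x : 0 <= fbump eps x.
Proof.
rewrite /fbump; case: ifPn => [//|]; rewrite -ltNge ltr_norml => /andP [h1 h2].
case: ifP => _; first by apply: divr_ge0; [elra | exact: ltW].
case: ifP => _ //; by apply: divr_ge0; [elra | exact: ltW].
Qed.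

Lemma fbump_1 x : `|x| < 1 - eps -> fbump eps x = 1.
Proof.
rewrite ltr_norml => /andP [h1 h2]; rewrite /fbump.
have -> : (1 <= `|x|) = false.
  apply/negbTE; rewrite -ltNge ltr_norml; apply/andP; split; elra.
have -> : (x <= -1 + eps) = false by apply/negbTE; rewrite -ltNge; elra.
by have -> : (x <= 1 - eps) = true by apply/idP; elra.
Qed.

Lemma mvht_ge v h s h' : s <= mvht tau eps v h s h'.
Proof.
rewrite /mvht; case: ifP => // hs.
rewrite lerDr; apply: mulr_ge0; last exact: fbump_ge0.
rewrite le_min; apply/andP; split; [rewrite subr_ge0 // | elra].
Qed.

Lemma mvht_nonE v h s h' : `|h' - h| < 1 - eps -> tau v <= s + eps / 2 ->
  tau v <= mvht tau eps v h s h'.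
Proof.
move=> hx hs; rewrite /mvht fbump_1 // mulr1; case: ifPn => hst; last first.
  by rewrite -ltNge in hst; exact: ltW.
have [hle|hlt] := leP (tau v - s) (eps / 2).
  elra.
elra.
Qed.

Definition Inv (st : state R V) : Prop :=
  [/\ uniq (Ps st), size (ss st) = size (Ps st),
   (forall v, v \notin Ps st -> tk st v (phi v) <= tau v /\
        exists2 w, linked adj eps phi v w & tau w <= tk st v (phi v)) &
   (forall v, v \in Ps st -> nth 0 (ss st) (index v (Ps st)) <= tau v /\
        exists2 w, linked adj eps phi v w & tau w <= nth 0 (ss st) (index v (Ps st)))].

Lemma exists_next st : uniq (Ps st) -> (size (Ps st) < #|V|)%N ->
  exists P, is_next ord phi st P.
Proof.
move=> hu hs.
pose a v := tk st v (phi v).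
pose le' := fun x y => (a x < a y) || ((a x == a y) && ord x y).
have le'_tot : total le'.
  move=> x y; rewrite /le'; case: (ltgtP (a x) (a y)) => //= _; exact: ord_total.
have le'_tr : transitive le'.
  move=> y x z; rewrite /le' => /orP [h1|/andP [/eqP e1 o1]] /orP [h2|/andP [/eqP e2 o2]].
  - by rewrite (lt_trans h1 h2).
  - by rewrite -e2 h1.
  - by rewrite e1 h2.
  - by rewrite e1 e2 eqxx (ord_trans o1 o2) orbT.
have [v0 hv0] : exists v, v \notin Ps st.
  case: (pickP (fun v => v \notin Ps st)) => [v hv|h0]; first by exists v.
  exfalso; move: hs; rewrite ltnNge; move/negP; apply.
  rewrite -(card_uniqP hu); apply: subset_leq_card; apply/subsetP => x _.
  by move: (h0 x) => /negbFE.
pose U := [seq v <- enum V | v \notin Ps st].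
have hU : v0 \in sort le' U by rewrite mem_sort mem_filter hv0 mem_enum.
case hs' : (sort le' U) hU => [//|x s'] _.
have hsort : sorted le' (x :: s') by rewrite -hs'; exact: sort_sorted.
have hx : x \notin Ps st.
  have : x \in sort le' U by rewrite hs' mem_head.
  by rewrite mem_sort mem_filter => /andP [].
exists x; rewrite /is_next hx /=; apply/forallP => w; apply/implyP => hw.
have : w \in x :: s' by rewrite -hs' mem_sort mem_filter hw mem_enum.
rewrite in_cons => /orP [/eqP ->|hws].
  by rewrite eqxx ord_refl orbT.
have := order_path_min le'_tr hsort; move/allP/(_ w hws); exact.
Qed.

Lemma step_inv st : Inv st -> (size (Ps st) < #|V|)%N ->
  Inv (step adj tau eps ord phi st) /\
  size (Ps (step adj tau eps ord phi st)) = (size (Ps st)).+1.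
Proof.
case=> hu hsz hun hch hs.
have [P0 hP0] := exists_next hu hs.
rewrite /step; case: pickP => [P hP|/(_ P0)]; last by rewrite hP0.
move: hP => /andP [hPn _] /=.
set s := tk st P (phi P).
have [hsP [wP hlP hwP]] := hun P hPn.
split; last by rewrite /= size_rcons.
split => /=.
- by rewrite rcons_uniq hPn hu.
- by rewrite !size_rcons hsz.
- move=> v hvr; rewrite (negbTE hvr) /=.
  move: hvr; rewrite mem_rcons in_cons negb_or => /andP [hvP hv].
  have [hvt [w hlw hw]] := hun v hv.
  case: (boolP (adj v P)) => hadj /=; first last.
    by split => //; exists w.
  split; first by rewrite ge_min hvt.
  have [hle|hlt] := leP (tk st v (phi v)) (mvht tau eps v (phi P) s (phi v)).
    by exists w.
  case: (boolP (1 - eps <= `|phi v - phi P|)) => hE.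
    exists wP; last exact: le_trans hwP (mvht_ge _ _ _ _).
    rewrite /linked; apply: connect_trans (connect1 _) hlP; by rewrite /Ephi hadj hE.
  exists v; first exact: connect0.
  apply: mvht_nonE; first by rewrite ltNge.
  apply: le_trans (close hadj hlP) _; by rewrite lerD2r.
- move=> v; rewrite mem_rcons in_cons => /orP [/eqP ->|hv].
    rewrite -[rcons (Ps st) P]cats1 index_cat (negbTE hPn) /= eqxx addn0.
    rewrite nth_rcons hsz ltnn eqxx.
    by split => //; exists wP.
  rewrite -[rcons (Ps st) P]cats1 index_cat hv.
  rewrite nth_rcons hsz index_mem hv.
  exact: hch v hv.
Qed.

Lemma run_inv k : (k <= #|V|)%N ->
  Inv (iter k (step adj tau eps ord phi) (State [::] [::] (fun v _ => tau v))) /\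
  size (Ps (iter k (step adj tau eps ord phi) (State [::] [::] (fun v _ => tau v)))) = k.
Proof.
elim: k => [|k IH] hk /=.
  split=> //; split => //=.
  move=> v _; split => //; exists v => //; exact: connect0.
have [hI hs] := IH (ltnW hk).
have hlt : (size (Ps (iter k (step adj tau eps ord phi) (State [::] [::] (fun v _ => tau v)))) < #|V|)%N by rewrite hs.
have [H1 H2] := step_inv hI hlt.
by split => //; rewrite H2 hs.
Qed.

Lemma main v : (tau v - tau' adj tau v (rphi adj eps phi v)
       <= Tplus adj tau eps ord phi v - phi v <= tau v)
    /\ (tau v - eps / 2 <= Tplus adj tau eps ord phi v - phi v
        /\ Tplus adj tau eps ord phi v - phi v = phi v - Tminus adj tau eps ord phi v
        /\ Tplus adj tau eps ord phi v - phi v <= tau v).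
Proof.
rewrite /Tminus /Tplus.
set st := run adj tau eps ord phi.
have [[hu hsz hun hch] hsize] : Inv st /\ size (Ps st) = #|V| := run_inv (leqnn _).
have hv : v \in Ps st.
  apply/negPn/negP => hv.
  have := max_card (mem (v :: Ps st)).
  rewrite (card_uniqP _) /=; last by rewrite /= hv hu.
  by rewrite hsize ltnn.
have [hup [w hlw hw]] := hch v hv.
set x := nth 0 (ss st) (index v (Ps st)) in hup hw *.
have h1 := le_tau' (near hlw).
have h2 : tau v - tau w <= eps / 2.
  have := le_tau' (distle_mono (leqW (rphi_le v)) (near hlw)).
  have := forallP good_M1 v; lra.
split; [apply/andP; split|split; [|split]]; lra.
Qed.

End Proof.

Theorem proposition2p3 (R : realFieldType) (V : finType) (adj : rel V)
  (tau : V -> R) (eps : R) (ord : rel V)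
  (adj_sym : symmetric adj) (adj_irr : irreflexive adj)
  (G_conn : forall v w : V, connect adj v w)
  (tau_ge0 : forall v, 0 <= tau v)
  (eps_gt0 : 0 < eps) (eps_le : eps <= 1 / 2)
  (ord_refl : reflexive ord) (ord_anti : antisymmetric ord)
  (ord_trans : transitive ord) (ord_total : total ord)
  (phi : V -> R)
  (hM : leL adj tau eps (Mphi adj eps phi)) :
  forall v : V,
    (tau v - tau' adj tau v (rphi adj eps phi v)
       <= Tplus adj tau eps ord phi v - phi v <= tau v)
    /\ (tau v - eps / 2 <= Tplus adj tau eps ord phi v - phi v
        /\ Tplus adj tau eps ord phi v - phi v = phi v - Tminus adj tau eps ord phi v
        /\ Tplus adj tau eps ord phi v - phi v <= tau v).
Proof.
move=> v; apply: main => //.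
Qed.
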